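(* Let $(\mathfrak{g},[\cdot,\cdot],\langle\cdot,\cdot\rangle)$ be a quadratic Lie algebra. If $\mathfrak{g}$ admits a symplectic form, i.e. a nondegenerate 2-cocycle $\theta\in\wedge^2\mathfrak{g}^*$, then $\mathfrak{g}$ is nilpotent.
   Context: A quadratic Lie algebra is a finite-dimensional real Lie algebra $\mathfrak{g}$ endowed with a nondegenerate symmetric bilinear form $\langle\cdot,\cdot\rangle$ which is invariant: $\langle [u,v],w\rangle+\langle [u,w],v\rangle=0$ for all $u,v,w\in\mathfrak{g}$. A 2-form $\theta\in\wedge^2\mathfrak{g}^*$ is a 2-cocycle if $\theta([u,v],w)+\theta([v,w],u)+\theta([w,u],v)=0$ for all $u,v,w\in\mathfrak{g}$. *)

(* Defs.v *)
From HB Require Import structures.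
From mathcomp Require Import all_boot all_order all_algebra.
From mathcomp Require Import reals.
Set Implicit Arguments. Unset Strict Implicit. Unset Printing Implicit Defensive.
Import Order.TTheory GRing.Theory Num.Theory.
Local Open Scope ring_scope.

Section Defs.
Variables (R : realType) (V : vectType R).

Definition bilinear_op (br : V -> V -> V) : Prop :=
  (forall (a : R) (x y z : V), br (a *: x + y) z = a *: br x z + br y z) /\
  (forall (a : R) (x y z : V), br z (a *: x + y) = a *: br z x + br z y).

Definition bilinear_form (B : V -> V -> R) : Prop :=
  (forall (a : R) (x y z : V), B (a *: x + y) z = a * B x z + B y z) /\
  (forall (a : R) (x y z : V), B z (a *: x + y) = a * B z x + B z y).

Definition is_lie_bracket (br : V -> V -> V) : Prop :=
  [/\ bilinear_op br,
      (forall x, br x x = 0) &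
      (forall x y z, br x (br y z) + br y (br z x) + br z (br x y) = 0)].

Definition nondegenerate (B : V -> V -> R) : Prop :=
  forall x, (forall y, B x y = 0) -> x = 0.

Definition quadratic_form (br : V -> V -> V) (B : V -> V -> R) : Prop :=
  [/\ bilinear_form B,
      (forall x y, B x y = B y x),
      nondegenerate B &
      (forall u v w, B (br u v) w + B (br u w) v = 0)].

Definition two_form (theta : V -> V -> R) : Prop :=
  bilinear_form theta /\ (forall x, theta x x = 0).

Definition two_cocycle (br : V -> V -> V) (theta : V -> V -> R) : Prop :=
  forall u v w, theta (br u v) w + theta (br v w) u + theta (br w u) v = 0.

Definition symplectic_form (br : V -> V -> V) (theta : V -> V -> R) : Prop :=
  [/\ two_form theta, two_cocycle br theta & nondegenerate theta].

(* lower central series: C^0 = g, C^(k+1) = [g, C^k] = span{[x,y] | y in C^k} *)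
Inductive lcs (br : V -> V -> V) : nat -> V -> Prop :=
  | lcs0 : forall x, lcs br 0 x
  | lcs_br : forall k x y, lcs br k y -> lcs br k.+1 (br x y)
  | lcs_zero : forall k, lcs br k.+1 0
  | lcs_add : forall k x y, lcs br k.+1 x -> lcs br k.+1 y -> lcs br k.+1 (x + y)
  | lcs_scale : forall k (a : R) x, lcs br k.+1 x -> lcs br k.+1 (a *: x).

Definition nilpotent_lie (br : V -> V -> V) : Prop :=
  exists k, forall x, lcs br k x -> x = 0.

End Defs.

(* Main.v *)
Require Import Defs.
From HB Require Import structures.
From mathcomp Require Import all_boot all_order all_algebra.
From mathcomp Require Import reals.
From mathcomp.real_closed Require Import complex.
From Stdlib Require Import Classical.
Set Implicit Arguments. Unset Strict Implicit. Unset Printing Implicit Defensive.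
Import Order.TTheory GRing.Theory Num.Theory.
Local Open Scope ring_scope.

Lemma ex_max_nat (P : nat -> Prop) N :
  (exists d, P d) -> (forall d, P d -> (d <= N)%N) ->
  exists d, P d /\ forall d', P d' -> (d' <= d)%N.
Proof.
move=> [d0 Pd0] bnd; apply: NNPP => H.
have step : forall d, P d -> exists d', P d' /\ (d < d')%N.
  move=> d Pd; apply: NNPP => H2; apply: H; exists d; split=> // d' Pd'.
  rewrite leqNgt; apply/negP => lt; apply: H2; by exists d'.
have: forall k, exists d, P d /\ (k <= d)%N.
  elim=> [|k [d [Pd kd]]]; first by exists d0.
  have [d' [Pd' dd']] := step d Pd; exists d'; split=> //.
  exact: leq_ltn_trans kd dd'.
move=> /(_ N.+1) [d [Pd Nd]]; have := bnd d Pd.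
by rewrite leqNgt (leq_trans (leqnn _) Nd).
Qed.

Section Engel.
Variables (F : fieldType) (vT : vectType F) (b : vT -> vT -> vT).
Hypothesis bD1 : forall (a : F) x y z, b (a *: x + y) z = a *: b x z + b y z.
Hypothesis bD2 : forall (a : F) x y z, b z (a *: x + y) = a *: b z x + b z y.
Hypothesis balt : forall x, b x x = 0.
Hypothesis bjac : forall x y z, b x (b y z) + b y (b z x) + b z (b x y) = 0.
Variable homog : vT -> Prop.
Hypothesis hb : forall x y, homog x -> homog y -> homog (b x y).
Hypothesis hspan : exists s, (forall x, x \in s -> homog x) /\ (fullv <= <<s>>)%VS.
Hypothesis hnil : forall y x, homog y -> homog x -> exists N, iter N (b y) x = 0.

Lemma b0l z : b 0 z = 0.
Proof. by have := bD1 1 0 0 z; rewrite !scale1r !addr0 => /(congr1 (fun t => t - b 0 z)); rewrite subrr addrK. Qed.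
Lemma b0r z : b z 0 = 0.
Proof. by have := bD2 1 0 0 z; rewrite !scale1r !addr0 => /(congr1 (fun t => t - b z 0)); rewrite subrr addrK. Qed.
Lemma bDl x y z : b (x + y) z = b x z + b y z.
Proof. by have := bD1 1 x y z; rewrite !scale1r. Qed.
Lemma bDr x y z : b z (x + y) = b z x + b z y.
Proof. by have := bD2 1 x y z; rewrite !scale1r. Qed.
Lemma bZl a x z : b (a *: x) z = a *: b x z.
Proof. by have := bD1 a x 0 z; rewrite !addr0 b0l addr0. Qed.
Lemma bZr a x z : b z (a *: x) = a *: b z x.
Proof. by have := bD2 a x 0 z; rewrite !addr0 b0r addr0. Qed.
Lemma banti x y : b x y = - b y x.
Proof.
have := balt (x + y); rewrite bDl !bDr !balt add0r addr0 => /eqP.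
by rewrite addr_eq0 => /eqP.
Qed.
Lemma bNr x z : b z (- x) = - b z x.
Proof. by rewrite -scaleN1r bZr scaleN1r. Qed.
Lemma bjac2 k y w : b k (b y w) = b (b k y) w + b y (b k w).
Proof.
have := bjac k y w; rewrite [b w k]banti bNr [b w (b k y)]banti.
move/eqP; rewrite -addrA addr_eq0 opprD !opprK => /eqP ->; exact: addrC.
Qed.

Definition graded (X : {vspace vT}) :=
  exists s, (forall x, x \in s -> homog x /\ x \in X) /\ (X <= <<s>>)%VS.
Definition subalg (K : {vspace vT}) :=
  forall x y, x \in K -> y \in K -> b x y \in K.
Definition stable (K U : {vspace vT}) :=
  forall k u, k \in K -> u \in U -> b k u \in U.

Lemma graded0 : graded 0%VS.
Proof. by rewrite /graded; exists [::]; split=> //; rewrite span_nil subvv. Qed.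

Lemma graded_out V U : graded V -> ~~ (V <= U)%VS ->
  exists x, [/\ homog x, x \in V & x \notin U].
Proof.
case=> s [hs Vs] nVU; apply: NNPP => H; apply: (negP nVU).
apply: subv_trans Vs _; apply/span_subvP => x xs; apply: NNPP => xU; apply: H.
have [hx xV] := hs x xs; exists x; split=> //; exact/negP.
Qed.

Lemma engel m (K : {vspace vT}) : (\dim K <= m)%N -> graded K -> subalg K ->
  forall U V : {vspace vT}, ~~ (V <= U)%VS -> stable K U -> stable K V -> graded V ->
  exists v, [/\ homog v, v \in V, v \notin U & forall k, k \in K -> b k v \in U].
Proof.
elim: m K => [|m IH] K dK gK sK U V nVU sKU sKV gV.
  have K0 : K = 0%VS by apply/eqP; rewrite -dimv_eq0 -leqn0.
  have [x [hx xV xU]] := graded_out gV nVU.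
  exists x; split=> // k; rewrite K0 memv0 => /eqP ->; rewrite b0l mem0v //.
have [K0|K0] := eqVneq K 0%VS.
  have [x [hx xV xU]] := graded_out gV nVU.
  exists x; split=> // k; rewrite K0 memv0 => /eqP ->; rewrite b0l mem0v //.
pose P (d : nat) := exists K' : {vspace vT}, [/\ graded K', subalg K', (K' <= K)%VS,
   K' != K & \dim K' = d].
have [d [[K' [gK' sK' K'K nK' dK']] maxd]] : exists d, P d /\ forall d', P d' -> (d' <= d)%N.
  apply: (@ex_max_nat P (\dim K)).
    exists 0%N, 0%VS; split; rewrite ?sub0v ?dimv0 1?eq_sym //; first exact: graded0.
    by move=> x y; rewrite !memv0 => /eqP -> _; rewrite b0l.
  by move=> d'; rewrite /P => -[K2 [_ _ K2K _ <-]]; apply: dimvS.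
have dK'm : (\dim K' <= m)%N.
  have: (\dim K' < \dim K)%N.
    by rewrite ltn_neqAle (dimv_leqif_eq K'K) nK' dimvS.
  move=> lt; rewrite -ltnS; exact: leq_trans lt dK.
have nKK' : ~~ (K <= K')%VS.
  by apply: contra nK' => KK'; rewrite eqEsubv K'K KK'.
have sK'K : stable K' K by move=> k u kK' uK; apply: sK => //; apply: (subvP K'K).
have [y [hy yK yK' yb]] := IH K' dK'm gK' sK' K' K nKK' sK' sK'K gK.
set K'' := (<[y]> + K')%VS.
have gK'' : graded K''.
  case: gK' => s [hs K's]; exists (y :: s); split.
    move=> x; rewrite inE => /orP [/eqP ->|xs].
      by split=> //; apply: (subvP (addvSl _ _)); exact: memv_line.
    have [hx xK'] := hs x xs; split=> //; exact: (subvP (addvSr _ _)).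
  by rewrite span_cons; apply: addvS.
have sK'' : subalg K''.
  move=> x z /memv_addP [x1 /vlineP [a ->] [x2 x2K' ->]].
  move=> /memv_addP [z1 /vlineP [c ->] [z2 z2K' ->]].
  apply: (subvP (addvSr _ _)).
  rewrite !bDl !bDr !bZl !bZr balt !scaler0 !add0r.
  apply: memvD; first by apply: memvZ; rewrite banti memvN; exact: yb.
  apply: memvD; first by apply: memvZ; exact: yb.
  exact: sK'.
have K''K : (K'' <= K)%VS by rewrite subv_add -memvE yK K'K.
have yK'' : y \in K'' by apply: (subvP (addvSl _ _)); exact: memv_line.
have K'K'' : (K' <= K'')%VS by exact: addvSr.
have K''eq : K'' = K.
  apply/eqP; apply: NNPP => /negP ne.
  have lt : (\dim K' < \dim K'')%N.
    rewrite ltn_neqAle (dimv_leqif_eq K'K'') dimvS // andbT.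
    by apply: contraNneq yK' => ->.
  have := maxd (\dim K'') (ex_intro _ K'' (And5 gK'' sK'' K''K ne erefl)).
  by rewrite -dK' leqNgt lt.
have sK'U : stable K' U by move=> k u kK' uU; apply: sKU => //; apply: (subvP K'K).
have sK'V : stable K' V by move=> k u kK' uU; apply: sKV => //; apply: (subvP K'K).
have [v [hv vV vU vb]] := IH K' dK'm gK' sK' U V nVU sK'U sK'V gV.
pose w j := iter j (b y) v.
have hw j : homog (w j) by elim: j => //= j IHj; apply: hb.
have wV j : w j \in V by elim: j => //= j IHj; apply: sKV.
have wb j k : k \in K' -> b k (w j) \in U.
  elim: j k => [|j IHj] k kK' /=; first exact: vb.
  rewrite bjac2; apply: memvD; first exact: IHj (yb k kK').
  by apply: sKU => //; exact: IHj.
have [N wN] := hnil hy hv.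
have exU : exists j, w j \in U by exists N; rewrite /w wN mem0v.
case: (ex_minnP exU) => j0 wj0 minj.
case: j0 wj0 minj => [|j] wj minj; first by rewrite /= (negbTE vU) in wj.
exists (w j); split=> //.
  by apply/negP => /minj; rewrite ltnn.
rewrite -K''eq => k /memv_addP [k1 /vlineP [a ->] [k2 k2K' ->]].
rewrite bDl bZl; apply: memvD; last exact: wb.
by apply: memvZ.
Qed.

Definition killed d x := forall ws : seq vT, size ws = d -> foldr b x ws = 0.

Lemma foldr_lin ws a x y : foldr b (a *: x + y) ws = a *: foldr b x ws + foldr b y ws.
Proof. by elim: ws => //= c ws ->; rewrite bD2. Qed.

Lemma nilpotent_words : exists d, forall x, killed d x.
Proof.
have gF : graded fullv.
  by case: hspan => s [hs Fs]; exists s; split=> // x xs; split; [exact: hs | exact: memvf].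
have sF : subalg fullv by move=> *; exact: memvf.
have sFF : stable fullv fullv by move=> *; exact: memvf.
suff: forall m, exists (U : {vspace vT}) d, [/\ (m <= \dim U)%N || (U == fullv),
    stable fullv U & forall x, x \in U -> killed d x].
  move=> /(_ (\dim (fullv : {vspace vT}))) [U [d [dU _ kU]]].
  have UF : U = fullv.
    apply/eqP; case/orP: dU => // dU; by rewrite eqEdim subvf dU.
  by exists d => x; apply: kU; rewrite UF memvf.
elim=> [|m [U [d [dU sU kU]]]].
  exists 0%VS, 0%N; split=> //.
    by move=> k u _; rewrite memv0 => /eqP ->; rewrite b0r mem0v.
  by move=> x; rewrite memv0 => /eqP -> [|//].
have [UF|UF] := eqVneq U fullv.
  by exists U, d; rewrite UF eqxx orbT; split=> //; rewrite -UF.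
have nFU : ~~ (fullv <= U)%VS.
  by apply: contra UF => FU; rewrite eqEsubv subvf FU.
have [v [_ _ vU vb]] := @engel _ _ (leqnn _) gF sF U fullv nFU sU sFF gF.
have UvU : (U <= <[v]> + U)%VS by exact: addvSr.
have vvU : v \in (<[v]> + U)%VS by apply: (subvP (addvSl _ _)); exact: memv_line.
exists (<[v]> + U)%VS, d.+1; split.
- case/orP: dU => [dU|]; last by rewrite (negbTE UF).
  apply/orP; left; apply: leq_ltn_trans dU _.
  rewrite ltn_neqAle (dimv_leqif_eq UvU) dimvS // andbT.
  by apply: contraNneq vU => ->.
- move=> k u _ /memv_addP [u1 /vlineP [a ->] [u2 u2U ->]].
  rewrite bD2; apply: (subvP UvU); apply: memvD.
    by apply: memvZ; apply: vb; exact: memvf.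
  by apply: sU => //; exact: memvf.
- move=> x /memv_addP [u1 /vlineP [a ->] [u2 u2U ->]] ws sz.
  rewrite foldr_lin.
  have -> : foldr b v ws = 0.
    move: sz; case/lastP: ws => [|ws' a'] //; rewrite size_rcons => -[sz].
    by rewrite foldr_rcons; apply: kU => //; apply: vb; exact: memvf.
  have -> : foldr b u2 ws = 0.
    by move: sz; case: ws => [|a0 ws'] //= [sz]; rewrite kU // b0r.
  by rewrite scaler0 addr0.
Qed.
End Engel.

Section Gen.
Variables (F : numClosedFieldType) (n : nat).
Local Notation vT := 'rV[F]_n.+1.
Variables (b : vT -> vT -> vT) (M : 'M[F]_n.+1).
Hypothesis bD1 : forall (a : F) x y z, b (a *: x + y) z = a *: b x z + b y z.
Hypothesis bD2 : forall (a : F) x y z, b z (a *: x + y) = a *: b z x + b z y.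
Hypothesis balt : forall x, b x x = 0.
Hypothesis bjac : forall x y z, b x (b y z) + b y (b z x) + b z (b x y) = 0.
Hypothesis Munit : M \in unitmx.
Hypothesis Mder : forall x y, b x y *m M = b (x *m M) y + b x (y *m M).

Lemma c0l z : b 0 z = 0.
Proof. by have := bD1 1 0 0 z; rewrite !scale1r !addr0 => /(congr1 (fun t => t - b 0 z)); rewrite subrr addrK. Qed.
Lemma c0r z : b z 0 = 0.
Proof. by have := bD2 1 0 0 z; rewrite !scale1r !addr0 => /(congr1 (fun t => t - b z 0)); rewrite subrr addrK. Qed.
Lemma cBl x y z : b (x - y) z = b x z - b y z.
Proof. by have := bD1 (-1) y x z; rewrite !scaleN1r addrC => ->; rewrite addrC. Qed.
Lemma cBr x y z : b z (x - y) = b z x - b z y.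
Proof. by have := bD2 (-1) y x z; rewrite !scaleN1r addrC => ->; rewrite addrC. Qed.
Lemma cZl a x z : b (a *: x) z = a *: b x z.
Proof. by have := bD1 a x 0 z; rewrite !addr0 c0l addr0. Qed.
Lemma cZr a x z : b z (a *: x) = a *: b z x.
Proof. by have := bD2 a x 0 z; rewrite !addr0 c0r addr0. Qed.

Definition gen l k (x : vT) := x *m (M - l%:M) ^+ k == 0.
Definition homogC x := exists l k, gen l k x.

Lemma step x y l m : b x y *m (M - (l + m)%:M) =
  b (x *m (M - l%:M)) y + b x (y *m (M - m%:M)).
Proof.
rewrite !mulmxBr !mul_mx_scalar Mder cBl cBr scalerDl cZl cZr.
by rewrite opprD addrACA.
Qed.


Lemma gen_eq l l' k k' x : l = l' -> k = k' -> gen l k x -> gen l' k' x.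
Proof. by move=> -> ->. Qed.

Lemma leib s : forall a c x y l m, (a + c)%N = s -> gen l a x -> gen m c y ->
  gen (l + m) s (b x y).
Proof.
elim: s => [|s IH] a c x y l m.
  case: a => [|//]; case: c => [|//] _; rewrite /gen !expr0 !mulmx1 => /eqP -> _.
  by rewrite c0l.
case: a => [|a].
  by rewrite /gen expr0 mulmx1 => _ /eqP -> _; rewrite c0l mul0mx.
case: c => [|c].
  by rewrite /gen expr0 mulmx1 => _ _ /eqP ->; rewrite c0r mul0mx.
rewrite addSn addnS => -[eq] hx hy.
rewrite /gen exprS -mulmxE mulmxA step mulmxDl.
have hx' : gen l a (x *m (M - l%:M)) by rewrite /gen -mulmxA mulmxE -exprS.
have hy' : gen m c (y *m (M - m%:M)) by rewrite /gen -mulmxA mulmxE -exprS.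
rewrite (eqP (IH a c.+1 _ _ _ _ _ hx' hy)) ?(eqP (IH a.+1 c _ _ _ _ _ hx hy')) ?addr0 //.
by rewrite addnS.
Qed.

Lemma gen_unit l k x : (M - l%:M) \in unitmx -> gen l k x -> x = 0.
Proof.
move=> U /eqP hx.
have Uk : (M - l%:M) ^+ k \in unitmx.
  by elim: k {hx} => [|k IHk]; rewrite ?expr0 ?unitmx1 // exprS -mulmxE unitmx_mul U.
by rewrite -[x](mulmxK Uk) hx mul0mx.
Qed.

Lemma gen_root l k x : gen l k x -> x != 0 -> root (char_poly M) l.
Proof.
move=> g nz; rewrite -eigenvalue_root_char /eigenvalue /eigenspace kermx_eq0.
rewrite row_free_unit; apply/negP => U; move/negP: nz; apply; apply/eqP.
exact: gen_unit U g.
Qed.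

Lemma gen_nz_l l k x : gen l k x -> x != 0 -> l != 0.
Proof.
move=> g nz; apply/negP => /eqP l0; move/negP: nz; apply; apply/eqP.
by apply: gen_unit g; rewrite l0 raddf0 subr0.
Qed.

Lemma hnilC y x : homogC y -> homogC x -> exists N, iter N (b y) x = 0.
Proof.
move=> [mu [c gy]] [la [a gx]].
have [->|ynz] := eqVneq y 0; first by exists 1%N; rewrite /= c0l.
have mu0 := gen_nz_l gy ynz.
have itG j : gen (la + j%:R * mu) (a + j * c) (iter j (b y) x).
  elim: j => [|j IHj]; first by apply: gen_eq gx; rewrite ?mul0r ?addr0 ?mul0n ?addn0.
  rewrite iterS; apply: gen_eq (leib (erefl _) gy IHj).
    by rewrite -addn1 natrD mulrDl mul1r addrCA [mu + _]addrC.
  by rewrite mulSn addnCA.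
set rs := [seq la + j%:R * mu | j <- iota 0 n.+2].
have urs : uniq rs.
  rewrite map_inj_uniq ?iota_uniq // => i j /addrI /(mulIf mu0) /eqP.
  by rewrite eqr_nat => /eqP.
have : ~~ all (root (char_poly M)) rs.
  apply/negP => allr; have := max_poly_roots (monic_neq0 (char_poly_monic M)) allr.
  by rewrite urs size_char_poly /rs size_map size_iota ltnn => /(_ isT).
move/allPn => [nu /mapP [j _ ->] nr].
exists j; apply/eqP; apply: contraNT nr => nz; exact: gen_root (itG j) nz.
Qed.

Lemma iter_mulX (p : {poly F}) k : iter k ( *%R p) 1 = p ^+ k.
Proof. by elim: k => //= k ->; rewrite exprS. Qed.

Lemma decomp m : forall rs : seq F, (size rs <= m)%N -> forall x : vT,
  x *m horner_mx M (\prod_(r <- rs) ('X - r%:P)) = 0 ->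
  exists s, (forall z, z \in s -> homogC z) /\ x \in <<s>>%VS.
Proof.
elim: m => [|m IH] rs.
  rewrite leqn0 size_eq0 => /eqP -> x; rewrite big_nil rmorph1 mulmx1 => ->.
  by exists [::]; split=> //; rewrite span_nil mem0v.
case: rs => [|r rs'] szrs x hx.
  move: hx; rewrite big_nil rmorph1 mulmx1 => ->.
  by exists [::]; split=> //; rewrite span_nil mem0v.
move: hx; rewrite (bigID (pred1 r)) /=.
rewrite (eq_bigr (fun _ => 'X - r%:P)); last by move=> z /eqP ->.
rewrite big_const_seq iter_mulX.
set c := count _ _; set q := \prod_(z <- _ | _) _; set P1 := ('X - r%:P) ^+ c.
move=> hx.
have rq : ~~ root q r.
  by rewrite /q -big_filter root_prod_XsubC mem_filter eqxx.
have cop : coprimep P1 q.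
  by apply: coprimep_expl; rewrite coprimep_sym coprimep_XsubC.
have /Bezout_eq1_coprimepP [[u1 u2] /= e] := cop.
set H := horner_mx M.
have Hc : forall p1 p2 : {poly F}, H (p1 * p2) = H p1 *m H p2.
  by move=> p1 p2; rewrite /H rmorphM mulmxE.
pose x1 := x *m H (u2 * q). pose x2 := x *m H (u1 * P1).
have xe : x = x2 + x1 by rewrite /x1 /x2 -mulmxDr -rmorphD e rmorph1 mulmx1.
have HP1 : H P1 = (M - r%:M) ^+ c.
  by rewrite /H /P1 rmorphXn rmorphB /= horner_mx_X horner_mx_C.
have h1 : gen r c x1.
  rewrite /gen /x1 -HP1 -mulmxA -Hc.
  rewrite (mulrC (u2 * q)) mulrCA (mulrC u2) Hc mulmxA hx mul0mx //.
have h2 : x2 *m H q = 0.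
  by rewrite /x2 -mulmxA -Hc -mulrA mulrC Hc mulmxA hx mul0mx.
have szf : (size (filter (fun z => z != r) (r :: rs')) <= m)%N.
  rewrite size_filter /= eqxx /= add0n; apply: leq_trans (count_size _ _) _.
  by rewrite -ltnS.
have hx2 : x2 *m horner_mx M (\prod_(z <- filter (fun z => z != r) (r :: rs')) ('X - z%:P)) = 0.
  by rewrite big_filter.
have [s2 [hs2 xs2]] := IH _ szf x2 hx2.
exists (x1 :: s2); split.
  by move=> z; rewrite inE => /orP [/eqP ->|zs]; [exists r, c | exact: hs2].
by rewrite xe span_cons addrC memv_add ?memv_line.
Qed.

Lemma hspanC : exists s, (forall z, z \in s -> homogC z) /\ (fullv <= <<s>>)%VS.
Proof.
have all_x : forall x : vT, exists s, (forall z, z \in s -> homogC z) /\ x \in <<s>>%VS.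
  move=> x; have [rs e] := closed_field_poly_normal (char_poly M).
  apply: (@decomp (size rs) rs (leqnn _)).
  by rewrite (monicP (char_poly_monic M)) scale1r in e; rewrite -e Cayley_Hamilton mulmx0.
have: forall L : seq vT, exists s, (forall z, z \in s -> homogC z) /\ (<<L>> <= <<s>>)%VS.
  elim=> [|x L [s [hs Ls]]]; first by exists [::]; rewrite span_nil sub0v.
  have [s1 [hs1 xs1]] := all_x x.
  exists (s1 ++ s); split.
    by move=> z; rewrite mem_cat => /orP [] ?; [exact: hs1|exact: hs].
  by rewrite span_cons span_cat addvS // -memvE.
move=> /(_ (vbasis fullv)) [s [hs Fs]]; exists s; split=> //.
by rewrite -(span_basis (vbasisP fullv)).
Qed.

Lemma words_vanishC : exists d, forall x ws, size ws = d -> foldr b x ws = 0.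
Proof.
have hbC : forall x y, homogC x -> homogC y -> homogC (b x y).
  by move=> x y [l [a gx]] [m [c gy]]; exists (l + m), (a + c); exact: leib (erefl _) gx gy.
exact: (nilpotent_words bD1 bD2 balt bjac hbC hspanC hnilC).
Qed.
End Gen.

Lemma lin_expand (K : fieldType) (W : lmodType K) m (h : 'rV[K]_m -> W) :
  (forall a x y, h (a *: x + y) = a *: h x + h y) ->
  forall u, h u = \sum_(i < m) u 0 i *: h (delta_mx 0 i).
Proof.
move=> hl u; have h0 : h 0 = 0.
  by have := hl 1 0 0; rewrite !scale1r !addr0 => /(congr1 (fun t => t - h 0)); rewrite subrr addrK.
rewrite {1}(row_sum_delta u); elim/big_rec2: _ => [//|i y1 y2 _ IH].
by rewrite hl IH.
Qed.

Lemma form_expand (K : fieldType) m (h : 'rV[K]_m -> K) :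
  (forall a x y, h (a *: x + y) = a * h x + h y) ->
  forall u, h u = \sum_(i < m) u 0 i * h (delta_mx 0 i).
Proof.
move=> hl u; have h0 : h 0 = 0.
  by have := hl 1 0 0; rewrite !mul1r !scale1r !addr0 => /(congr1 (fun t => t - h 0)); rewrite subrr addrK.
rewrite {1}(row_sum_delta u); elim/big_rec2: _ => [//|i y1 y2 _ IH].
by rewrite hl IH.
Qed.

Lemma bil_zero (K : fieldType) m (W : lmodType K) (h : 'rV[K]_m -> 'rV[K]_m -> W) :
  (forall a x y z, h (a *: x + y) z = a *: h x z + h y z) ->
  (forall a x y z, h z (a *: x + y) = a *: h z x + h z y) ->
  (forall i j, h (delta_mx 0 i) (delta_mx 0 j) = 0) -> forall u w, h u w = 0.
Proof.
move=> h1 h2 h0 u w; rewrite (lin_expand (h := h^~ w)) //; apply: big1 => i _.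
rewrite (lin_expand (h := h (delta_mx 0 i))) // big1 ?scaler0 // => j _.
by rewrite h0 scaler0.
Qed.

Lemma tril_zero (K : fieldType) m (W : lmodType K) (h : 'rV[K]_m -> 'rV[K]_m -> 'rV[K]_m -> W) :
  (forall a x y v w, h (a *: x + y) v w = a *: h x v w + h y v w) ->
  (forall u v w, h u v w = h v w u) ->
  (forall i j k, h (delta_mx 0 i) (delta_mx 0 j) (delta_mx 0 k) = 0) -> forall u v w, h u v w = 0.
Proof.
move=> h1 hc h0 u v w; rewrite (lin_expand (h := fun x => h x v w)) //; apply: big1 => i _.
rewrite hc (lin_expand (h := fun x => h x w (delta_mx 0 i))) // big1 ?scaler0 // => j _.
rewrite hc (lin_expand (h := fun x => h x (delta_mx 0 i) (delta_mx 0 j))) // big1 ?scaler0 // => k _.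
by rewrite -hc h0 scaler0.
Qed.

Lemma bil_eq (K : fieldType) m (W : lmodType K) (h h' : 'rV[K]_m -> 'rV[K]_m -> W) :
  (forall a x y z, h (a *: x + y) z = a *: h x z + h y z) ->
  (forall a x y z, h z (a *: x + y) = a *: h z x + h z y) ->
  (forall a x y z, h' (a *: x + y) z = a *: h' x z + h' y z) ->
  (forall a x y z, h' z (a *: x + y) = a *: h' z x + h' z y) ->
  (forall i j, h (delta_mx 0 i) (delta_mx 0 j) = h' (delta_mx 0 i) (delta_mx 0 j)) ->
  forall u w, h u w = h' u w.
Proof.
move=> h1 h2 h1' h2' e u w; apply/eqP; rewrite -subr_eq0; apply/eqP.
apply: (bil_zero (h := fun u w => h u w - h' u w)) => [a x y z|a x y z|i j].
- by rewrite h1 h1' scalerBr opprD addrACA.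
- by rewrite h2 h2' scalerBr opprD addrACA.
- by rewrite e subrr.
Qed.

Lemma addr6 (T : zmodType) (p1 q1 p2 q2 p3 q3 : T) :
  p1 + q1 + (p2 + q2) + (p3 + q3) = p1 + p2 + p3 + (q1 + q2 + q3).
Proof. by rewrite (addrACA p1 q1 p2 q2) (addrACA (p1 + p2) (q1 + q2) p3 q3). Qed.
Lemma addr3rot (T : zmodType) (a b c : T) : a + b + c = b + c + a.
Proof. by rewrite -addrA addrC. Qed.

Section Real.
Variables (R : realType) (V : vectType R) (n : nat).
Local Notation rv := 'rV[R]_n.+1.
Variables (f : V -> rv) (g : rv -> V).
Hypothesis fl : forall a x y, f (a *: x + y) = a *: f x + f y.
Hypothesis gl : forall a x y, g (a *: x + y) = a *: g x + g y.
Hypothesis fK : cancel f g.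
Hypothesis gK : cancel g f.
Variables (br : V -> V -> V) (B th : V -> V -> R).
Hypothesis brD1 : forall (a : R) x y z, br (a *: x + y) z = a *: br x z + br y z.
Hypothesis brD2 : forall (a : R) x y z, br z (a *: x + y) = a *: br z x + br z y.
Hypothesis bralt : forall x, br x x = 0.
Hypothesis brjac : forall x y z, br x (br y z) + br y (br z x) + br z (br x y) = 0.
Hypothesis BD1 : forall (a : R) x y z, B (a *: x + y) z = a * B x z + B y z.
Hypothesis BD2 : forall (a : R) x y z, B z (a *: x + y) = a * B z x + B z y.
Hypothesis Bsym : forall x y, B x y = B y x.
Hypothesis Bnd : forall x, (forall y, B x y = 0) -> x = 0.
Hypothesis Binv : forall u v w, B (br u v) w + B (br u w) v = 0.
Hypothesis thD1 : forall (a : R) x y z, th (a *: x + y) z = a * th x z + th y z.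
Hypothesis thD2 : forall (a : R) x y z, th z (a *: x + y) = a * th z x + th z y.
Hypothesis thalt : forall x, th x x = 0.
Hypothesis thcoc : forall u v w, th (br u v) w + th (br v w) u + th (br w u) v = 0.
Hypothesis thnd : forall x, (forall y, th x y = 0) -> x = 0.

Definition brR (a c : rv) := f (br (g a) (g c)).
Definition BR (a c : rv) := B (g a) (g c).
Definition thR (a c : rv) := th (g a) (g c).

Lemma f0 : f 0 = 0.
Proof. by have := fl 1 0 0; rewrite !scale1r !addr0 => /(congr1 (fun t => t - f 0)); rewrite subrr addrK. Qed.
Lemma g0 : g 0 = 0.
Proof. by have := gl 1 0 0; rewrite !scale1r !addr0 => /(congr1 (fun t => t - g 0)); rewrite subrr addrK. Qed.

Lemma fD x y : f (x + y) = f x + f y.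
Proof. by have := fl 1 x y; rewrite !scale1r. Qed.
Lemma gD x y : g (x + y) = g x + g y.
Proof. by have := gl 1 x y; rewrite !scale1r. Qed.

Lemma brR_D1 a x y z : brR (a *: x + y) z = a *: brR x z + brR y z.
Proof. by rewrite /brR gl brD1 fl. Qed.
Lemma brR_D2 a x y z : brR z (a *: x + y) = a *: brR z x + brR z y.
Proof. by rewrite /brR gl brD2 fl. Qed.
Lemma brR_alt x : brR x x = 0.
Proof. by rewrite /brR bralt f0. Qed.
Lemma brR_jac x y z : brR x (brR y z) + brR y (brR z x) + brR z (brR x y) = 0.
Proof. by rewrite /brR !fK -!fD brjac f0. Qed.

Lemma BR_D1 a x y z : BR (a *: x + y) z = a * BR x z + BR y z.
Proof. by rewrite /BR gl BD1. Qed.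
Lemma BR_D2 a x y z : BR z (a *: x + y) = a * BR z x + BR z y.
Proof. by rewrite /BR gl BD2. Qed.
Lemma thR_D1 a x y z : thR (a *: x + y) z = a * thR x z + thR y z.
Proof. by rewrite /thR gl thD1. Qed.
Lemma thR_D2 a x y z : thR z (a *: x + y) = a * thR z x + thR z y.
Proof. by rewrite /thR gl thD2. Qed.
Lemma BR_nd x : (forall y, BR x y = 0) -> x = 0.
Proof.
move=> h; rewrite -[x]gK; have -> : g x = 0 by apply: Bnd => y; rewrite -[y]fK; exact: h.
exact: f0.
Qed.
Lemma thR_nd x : (forall y, thR x y = 0) -> x = 0.
Proof.
move=> h; rewrite -[x]gK; have -> : g x = 0 by apply: thnd => y; rewrite -[y]fK; exact: h.
exact: f0.
Qed.

Definition Gm : 'M[R]_n.+1 := \matrix_(i, j) BR (delta_mx 0 i) (delta_mx 0 j).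
Definition Tm : 'M[R]_n.+1 := \matrix_(i, j) thR (delta_mx 0 i) (delta_mx 0 j).

Lemma form_mx (h : rv -> rv -> R) :
  (forall a x y z, h (a *: x + y) z = a * h x z + h y z) ->
  (forall a x y z, h z (a *: x + y) = a * h z x + h z y) ->
  forall a c, h a c = (a *m (\matrix_(i, j) h (delta_mx 0 i) (delta_mx 0 j)) *m c^T) 0 0.
Proof.
move=> h1 h2 a c; rewrite (form_expand (h := h^~ c)) // !mxE.
under eq_bigr do rewrite (form_expand (h := h (delta_mx 0 _))) //.
under [RHS]eq_bigr do rewrite !mxE big_distrl /=.
rewrite exchange_big; apply: eq_bigr => i _; rewrite big_distrr; apply: eq_bigr => j _.
by rewrite [X in _ = _ * X * _]mxE /= [c 0 j * _]mulrC mulrA.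
Qed.

Lemma BR_mx a c : BR a c = (a *m Gm *m c^T) 0 0.
Proof. exact: form_mx BR_D1 BR_D2 a c. Qed.
Lemma thR_mx a c : thR a c = (a *m Tm *m c^T) 0 0.
Proof. exact: form_mx thR_D1 thR_D2 a c. Qed.

Lemma form_unit (h : rv -> rv -> R) (Hm : 'M[R]_n.+1) :
  (forall a c, h a c = (a *m Hm *m c^T) 0 0) ->
  (forall x, (forall y, h x y = 0) -> x = 0) -> Hm \in unitmx.
Proof.
move=> hm hnd; rewrite unitmxE unitfE; apply/negP => /det0P [v vnz vH].
move/negP: vnz; apply; apply/eqP; apply: hnd => y.
by rewrite hm vH mul0mx mxE.
Qed.

Lemma Gm_unit : Gm \in unitmx.
Proof. exact: form_unit BR_mx BR_nd. Qed.
Lemma Tm_unit : Tm \in unitmx.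
Proof. exact: form_unit thR_mx thR_nd. Qed.

Definition Mm := Tm *m invmx Gm.
Lemma Mm_unit : Mm \in unitmx.
Proof. by rewrite unitmx_mul Tm_unit unitmx_inv Gm_unit. Qed.

Lemma thR_M a c : thR a c = BR (a *m Mm) c.
Proof. by rewrite thR_mx BR_mx /Mm mulmxA mulmxKV // Gm_unit. Qed.

Lemma form_skew (h : rv -> rv -> R) :
  (forall a x y z, h (a *: x + y) z = a * h x z + h y z) ->
  (forall a x y z, h z (a *: x + y) = a * h z x + h z y) ->
  (forall x, h x x = 0) -> forall x y, h x y = - h y x.
Proof.
move=> h1 h2 ha x y.
have hDl u v w : h (u + v) w = h u w + h v w by have := h1 1 u v w; rewrite scale1r mul1r.
have hDr u v w : h w (u + v) = h w u + h w v by have := h2 1 u v w; rewrite scale1r mul1r.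
have := ha (x + y); rewrite hDl !hDr !ha add0r addr0 => /eqP.
by rewrite addr_eq0 => /eqP.
Qed.

Lemma thR_skew x y : thR x y = - thR y x.
Proof. apply: form_skew thR_D1 thR_D2 _ x y => z; exact: thalt. Qed.
Lemma BR_sym x y : BR x y = BR y x.
Proof. exact: Bsym. Qed.
Lemma brR_anti x y : brR x y = - brR y x.
Proof. by rewrite (@banti _ _ brR brR_D1 brR_D2 brR_alt). Qed.
Lemma BR0l y : BR 0 y = 0.
Proof. by have := BR_D1 1 0 0 y; rewrite !scale1r !addr0 mul1r => /(congr1 (fun t => t - BR 0 y)); rewrite subrr addrK. Qed.
Lemma BR_N x y : BR (- x) y = - BR x y.
Proof. by have := BR_D1 (-1) x 0 y; rewrite scaleN1r addr0 mulN1r BR0l addr0. Qed.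
Lemma BR_Dl x y z : BR (x + y) z = BR x z + BR y z.
Proof. by have := BR_D1 1 x y z; rewrite scale1r mul1r. Qed.

Lemma BR_cyc a b c : BR (brR a b) c = BR (brR c a) b.
Proof.
have := Binv (g a) (g b) (g c); rewrite -[br (g a) (g b)]fK -[br (g a) (g c)]fK.
rewrite -/(brR a b) -/(brR a c) -[X in B X (g c)]/(g (brR a b)).
move=> /eqP; rewrite addr_eq0 => /eqP; rewrite -/(BR (brR a b) c) -/(BR (brR a c) b) => ->.
by rewrite brR_anti BR_N opprK.
Qed.

Lemma Mder x y : brR x y *m Mm = brR (x *m Mm) y + brR x (y *m Mm).
Proof.
apply/eqP; rewrite -subr_eq0; apply/eqP; apply: BR_nd => z.
rewrite BR_Dl BR_N BR_Dl -thR_M.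
have := thcoc (g x) (g y) (g z).
rewrite -[br (g x) (g y)]fK -[br (g y) (g z)]fK -[br (g z) (g x)]fK.
rewrite -/(brR x y) -/(brR y z) -/(brR z x) -/(thR (brR x y) z) -/(thR (brR y z) x) -/(thR (brR z x) y).
move=> /eqP; rewrite -addrA addr_eq0 => /eqP ->.
rewrite thR_skew [thR (brR z x) y]thR_skew !thR_M (BR_sym (x *m Mm)) (BR_sym (y *m Mm)).
rewrite BR_cyc [BR (brR z x) _]BR_cyc [BR (brR (y *m Mm) z) x]BR_cyc.
by rewrite opprD !opprK subrr.
Qed.

Local Notation C := (complex R).
Local Notation cv := 'rV[C]_n.+1.
Definition iota_ (a : rv) : cv := map_mx (real_complex R) a.
Definition cst i j := iota_ (brR (delta_mx 0 i) (delta_mx 0 j)).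
Definition brC (u w : cv) : cv :=
  \sum_(i < n.+1) \sum_(j < n.+1) (u 0 i * w 0 j) *: cst i j.
Definition Mc : 'M[C]_n.+1 := map_mx (real_complex R) Mm.

Lemma iotaD a c : iota_ (a + c) = iota_ a + iota_ c.
Proof. exact: map_mxD. Qed.
Lemma iotaZ k a : iota_ (k *: a) = (k%:C)%C *: iota_ a.
Proof. exact: map_mxZ. Qed.
Lemma iotaM a (m : 'M[R]_n.+1) : iota_ (a *m m) = iota_ a *m map_mx (real_complex R) m.
Proof. exact: map_mxM. Qed.
Lemma iota_delta i : iota_ (delta_mx 0 i) = delta_mx 0 i.
Proof. exact: map_delta_mx. Qed.
Lemma iota_inj : injective iota_.
Proof. exact: map_mx_inj. Qed.
Lemma iota0 : iota_ 0 = 0.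
Proof. exact: map_mx0. Qed.

Lemma brC_D1 a x y z : brC (a *: x + y) z = a *: brC x z + brC y z.
Proof.
rewrite /brC scaler_sumr -big_split; apply: eq_bigr => i _.
rewrite /= scaler_sumr -big_split; apply: eq_bigr => j _.
by rewrite /= !mxE scalerA -scalerDl mulrDl mulrA.
Qed.
Lemma brC_D2 a x y z : brC z (a *: x + y) = a *: brC z x + brC z y.
Proof.
rewrite /brC scaler_sumr -big_split; apply: eq_bigr => i _.
rewrite /= scaler_sumr -big_split; apply: eq_bigr => j _.
by rewrite /= !mxE scalerA -scalerDl mulrDr mulrCA.
Qed.

Lemma brC_iota a c : brC (iota_ a) (iota_ c) = iota_ (brR a c).
Proof.
have e : brR a c = \sum_(i < n.+1) \sum_(j < n.+1)
    (a 0 i * c 0 j) *: brR (delta_mx 0 i) (delta_mx 0 j).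
  rewrite (lin_expand (h := brR^~ c)); last by move=> *; exact: brR_D1.
  apply: eq_bigr => i _.
  rewrite (lin_expand (h := brR (delta_mx 0 i))); last by move=> *; exact: brR_D2.
  by rewrite scaler_sumr; apply: eq_bigr => j _; rewrite scalerA.
rewrite e /brC (big_morph iota_ iotaD iota0); apply: eq_bigr => i _.
rewrite (big_morph iota_ iotaD iota0); apply: eq_bigr => j _.
by rewrite iotaZ /cst !mxE rmorphM.
Qed.
Lemma iotaN a : iota_ (- a) = - iota_ a.
Proof. exact: map_mxN. Qed.

Lemma brC_anti u w : brC u w = - brC w u.
Proof.
apply: (bil_eq (h' := fun u w => - brC w u)) => [a x y z|a x y z|a x y z|a x y z|i j].
- exact: brC_D1.
- exact: brC_D2.
- by rewrite brC_D2 opprD scalerN.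
- by rewrite brC_D1 opprD scalerN.
- by rewrite -!iota_delta !brC_iota brR_anti iotaN.
Qed.

Lemma brC_alt u : brC u u = 0.
Proof.
have := brC_anti u u; move/eqP; rewrite -addr_eq0 -mulr2n -scaler_nat scaler_eq0 pnatr_eq0 /=.
by move/eqP.
Qed.

Definition Jc u v w := brC u (brC v w) + brC v (brC w u) + brC w (brC u v).

Lemma brC_jac u v w : Jc u v w = 0.
Proof.
apply: tril_zero => [a x y v' w'|u' v' w'|i j k].
- rewrite /Jc brC_D1 brC_D2 brC_D2 brC_D1 brC_D2.
  by rewrite !scalerDr addr6.
- by rewrite /Jc addr3rot.
- by rewrite /Jc -!iota_delta !brC_iota -!iotaD brR_jac iota0.
Qed.

Lemma Mc_unit : Mc \in unitmx.
Proof. by rewrite /Mc map_unitmx Mm_unit. Qed.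

Lemma Mc_der u w : brC u w *m Mc = brC (u *m Mc) w + brC u (w *m Mc).
Proof.
apply: (bil_eq (h := fun u w => brC u w *m Mc)
  (h' := fun u w => brC (u *m Mc) w + brC u (w *m Mc))) => [a x y z|a x y z|a x y z|a x y z|i j].
- by rewrite brC_D1 mulmxDl scalemxAl.
- by rewrite brC_D2 mulmxDl scalemxAl.
- by rewrite mulmxDl -scalemxAl !brC_D1 scalerDr addrACA.
- by rewrite mulmxDl -scalemxAl !brC_D2 scalerDr addrACA.
- rewrite /= -(iota_delta i) -(iota_delta j).
  by rewrite /Mc -!iotaM !brC_iota -iotaM Mder iotaD.
Qed.

Lemma words_real : exists d, forall x (ws : seq V), size ws = d -> foldr br x ws = 0.
Proof.
have [d hd] := words_vanishC brC_D1 brC_D2 brC_alt brC_jac Mc_unit Mc_der.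
exists d => x ws sz.
pose phi x := iota_ (f x).
have phib a y : phi (br a y) = brC (phi a) (phi y) by rewrite /phi brC_iota /brR !fK.
have : phi (foldr br x ws) = foldr brC (phi x) (map phi ws).
  by elim: ws {sz} => //= a ws IH; rewrite phib IH.
rewrite hd ?size_map // -iota0 => /iota_inj; rewrite -f0; exact: (can_inj fK).
Qed.
End Real.

Lemma words_gen (R : realType) (V : vectType R) (m : nat) (f : V -> 'rV[R]_m) (g : 'rV[R]_m -> V)
  (fl : forall a x y, f (a *: x + y) = a *: f x + f y)
  (gl : forall a x y, g (a *: x + y) = a *: g x + g y)
  (fK : cancel f g) (gK : cancel g f)
  (br : V -> V -> V) (B th : V -> V -> R)
  (brD1 : forall (a : R) x y z, br (a *: x + y) z = a *: br x z + br y z)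
  (brD2 : forall (a : R) x y z, br z (a *: x + y) = a *: br z x + br z y)
  (bralt : forall x, br x x = 0)
  (brjac : forall x y z, br x (br y z) + br y (br z x) + br z (br x y) = 0)
  (BD1 : forall (a : R) x y z, B (a *: x + y) z = a * B x z + B y z)
  (BD2 : forall (a : R) x y z, B z (a *: x + y) = a * B z x + B z y)
  (Bsym : forall x y, B x y = B y x)
  (Bnd : forall x, (forall y, B x y = 0) -> x = 0)
  (Binv : forall u v w, B (br u v) w + B (br u w) v = 0)
  (thD1 : forall (a : R) x y z, th (a *: x + y) z = a * th x z + th y z)
  (thD2 : forall (a : R) x y z, th z (a *: x + y) = a * th z x + th z y)
  (thalt : forall x, th x x = 0)
  (thcoc : forall u v w, th (br u v) w + th (br v w) u + th (br w u) v = 0)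
  (thnd : forall x, (forall y, th x y = 0) -> x = 0) :
  exists d, forall x (ws : seq V), size ws = d -> foldr br x ws = 0.
Proof.
case: m f g fl gl fK gK => [|n] f g fl gl fK gK.
  exists 0%N => x [|//] _ /=; rewrite -[x]fK [f x]thinmx0.
  by have := gl 1 0 0; rewrite !scale1r !addr0 => /(congr1 (fun t => t - g 0)); rewrite subrr addrK.
exact: (words_real fl gl fK gK brD1 brD2 bralt brjac BD1 BD2 Bsym Bnd Binv thD1 thD2 thalt thcoc thnd).
Qed.

Lemma lcs_killed (R : realType) (V : vectType R) (br : V -> V -> V)
  (brD2 : forall (a : R) x y z, br z (a *: x + y) = a *: br z x + br z y) d :
  (forall x (ws : seq V), size ws = d -> foldr br x ws = 0) ->
  forall k x, lcs br k x -> forall ws : seq V, size ws = (d - k)%N -> foldr br x ws = 0.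
Proof.
have f0 ws : foldr br 0 ws = 0 by elim: ws => //= a ws ->; rewrite (b0r brD2).
move=> hd k x; elim => {k x}.
- by move=> x ws; rewrite subn0; apply: hd.
- move=> k x y Hy IH ws sz; case: (ltnP k d) => kd.
    rewrite -foldr_rcons; apply: IH; rewrite size_rcons sz subnS prednK // subn_gt0 //.
  have y0 : y = 0 by apply: (IH [::]); apply/esym/eqP; rewrite subn_eq0.
  move: sz; have -> : (d - k.+1 = 0)%N by apply/eqP; rewrite subn_eq0 ltnW.
  by case: ws => //= _; rewrite y0 (b0r brD2).
- by move=> k ws _; exact: f0.
- move=> k x y _ IHx _ IHy ws sz.
  by have := foldr_lin brD2 ws 1 x y; rewrite !scale1r => ->; rewrite IHx // IHy // addr0.
- move=> k a x _ IH ws sz.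
  by have := foldr_lin brD2 ws a x 0; rewrite !addr0 f0 addr0 => ->; rewrite IH // scaler0.
Qed.

Import VectorInternalTheory.

Theorem mainTheorem1 (R : realType) (V : vectType R)
  (br : V -> V -> V) (B : V -> V -> R) :
  is_lie_bracket br -> quadratic_form br B ->
  (exists theta : V -> V -> R, symplectic_form br theta) ->
  nilpotent_lie br.
Proof.
move=> [[brD1 brD2] bralt brjac] [[BD1 BD2] Bsym Bnd Binv] [th [[[thD1 thD2] thalt] thcoc thnd]].
pose f := @VectorInternalTheory.v2r R V; pose g := @VectorInternalTheory.r2v R V.
have fl : forall (a : R) x y, f (a *: x + y) = a *: f x + f y.
  by move=> a x y; rewrite /f linearD linearZ.
have gl : forall (a : R) x y, g (a *: x + y) = a *: g x + g y.
  by move=> a x y; rewrite /g linearD linearZ.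
have [d hd] := words_gen fl gl (@VectorInternalTheory.v2rK _ V) (@VectorInternalTheory.r2vK _ V)
  brD1 brD2 bralt brjac BD1 BD2 Bsym Bnd Binv thD1 thD2 thalt thcoc thnd.
exists d => x /(lcs_killed brD2 hd) /(_ [::]); apply; by rewrite subnn.
Qed.
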